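(* Let $k\ge 2$, let $H_0$ be a finite $k$-uniform hypergraph and let $(H_t)_{t\ge0}$ be the ILTH hypergraphs generated from $H_0$. If $H_0$ contains a motif of type $i\in\{13,14,15,24,25\}$ that contains $m$ vertices, then motifs of type $i$ occur at least $(m+1)^t$ times in $H_t$, for every $t\ge0$.
   Context: A $k$-uniform hypergraph has every hyperedge a $k$-element subset of the vertex set. The ILTH process: given $H_t$, form $H_{t+1}$ by adding for each vertex $x\in V(H_t)$ a new vertex $x'$ (its clone), and taking $E(H_{t+1})=E(H_t)\cup\{(e\setminus\{x\})\cup\{x'\} : e\in E(H_t),\ x\in e\}$. A motif consists of three distinct hyperedges $e_1,e_2,e_3$; the vertices it contains are those of $e_1\cup e_2\cup e_3$. Its type is the binary string $i_1\dots i_7$ where $i_j=1$ iff the $j$-th of the regions $e_1\setminus(e_2\cup e_3)$, $e_2\setminus(e_1\cup e_3)$, $e_3\setminus(e_1\cup e_2)$, $(e_1\cap e_2)\setminus e_3$, $(e_2\cap e_3)\setminus e_1$, $(e_1\cap e_3)\setminus e_2$, $e_1\cap e_2\cap e_3$ is nonempty, up to relabelling of $e_1,e_2,e_3$. The types are: type 13 $=0001111$, type 14 $=1001111$, type 15 $=1011111$, type 24 $=1001110$, type 25 $=1011110$. *)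

(* Defs.v *)
From mathcomp Require Import all_boot.
Set Implicit Arguments. Unset Strict Implicit. Unset Printing Implicit Defensive.

Definition uniform (V : finType) (k : nat) (E : {set {set V}}) : Prop :=
  forall e, e \in E -> #|e| = k.

(* Vertex type of H_t: V_{t+1} = V_t + V_t, inl x = old vertex x,
   inr x = clone x' of x. *)
Fixpoint ilth_vert (V : finType) (t : nat) : finType :=
  if t is t'.+1 then ((ilth_vert V t' + ilth_vert V t')%type : finType) else V.

Definition ilth_step (V : finType) (E : {set {set V}}) : {set {set (V + V)%type}} :=
  [set [set (@inl V V) y | y in e] | e : {set V} in E] :|:
  [set [set (@inl V V) y | y in e :\ x] :|: [set (@inr V V) x] | e : {set V} in E, x : V in e].

Fixpoint ilth (V : finType) (H0 : {set {set V}}) (t : nat) : {set {set ilth_vert V t}} :=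
  match t return {set {set ilth_vert V t}} with
  | 0 => H0
  | t'.+1 => ilth_step (ilth H0 t')
  end.

(* The 7 regions of an ordered triple of hyperedges, and the nonemptiness
   pattern i_1 ... i_7. *)
Definition regions (V : finType) (e1 e2 e3 : {set V}) : seq {set V} :=
  [:: e1 :\: (e2 :|: e3); e2 :\: (e1 :|: e3); e3 :\: (e1 :|: e2);
      (e1 :&: e2) :\: e3; (e2 :&: e3) :\: e1; (e1 :&: e3) :\: e2;
      e1 :&: e2 :&: e3].

Definition pattern (V : finType) (e1 e2 e3 : {set V}) : seq bool :=
  [seq A != set0 | A <- regions e1 e2 e3].

Definition type_code (i : nat) : seq bool :=
  match i with
  | 13 => [:: false; false; false; true; true; true; true]
  | 14 => [:: true; false; false; true; true; true; true]
  | 15 => [:: true; false; true; true; true; true; true]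
  | 24 => [:: true; false; false; true; true; true; false]
  | 25 => [:: true; false; true; true; true; true; false]
  | _ => [::]
  end.

Definition motif_of_type (V : finType) (M : {set {set V}}) (i : nat) : bool :=
  [exists e1 : {set V}, exists e2 : {set V}, exists e3 : {set V},
     [&& M == [set e1; e2; e3], e1 != e2, e2 != e3, e1 != e3 &
         pattern e1 e2 e3 == type_code i]].

Definition motif_vertices (V : finType) (M : {set {set V}}) : {set V} :=
  \bigcup_(e in M) e.

Definition motif_count (V : finType) (E : {set {set V}}) (i : nat) : nat :=
  #|[set M : {set {set V}} | (M \subset E) && (#|M| == 3) &
       motif_of_type M i]|.

(* Main.v *)
Require Import Defs.
From mathcomp Require Import all_boot.
Set Implicit Arguments. Unset Strict Implicit. Unset Printing Implicit Defensive.

Section Aux.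
Variable W : finType.

Definition phi (x : option W) (y : W) : (W + W)%type :=
  match x with None => inl y | Some a => if y == a then inr a else inl y end.

Lemma phi_inj x : injective (phi x).
Proof.
case: x => [a|] y z /=; last by case.
case: eqP => [->|ya]; case: eqP => [->|za] //; by case=> // ->.
Qed.

Definition psi (z : (W + W)%type) : W := match z with inl y => y | inr y => y end.

Lemma psiK x : cancel (phi x) psi.
Proof. case: x => [a|] y //=; by case: eqP => [->|]. Qed.

Definition G x (M : {set {set W}}) : {set {set (W + W)%type}} := (fun e : {set W} => phi x @: e) @: M.
Definition unG (N : {set {set (W + W)%type}}) : {set {set W}} := (fun e : {set (W + W)%type} => psi @: e) @: N.

Lemma GK x : cancel (G x) unG.
Proof.
move=> M; rewrite /unG /G -imset_comp -[RHS]imset_id; apply: eq_imset => e /=.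
by rewrite -imset_comp -[RHS]imset_id; apply: eq_imset => y /=; rewrite psiK.
Qed.

Lemma imsetD_inj (T U : finType) (f : T -> U) (A B : {set T}) :
  injective f -> f @: (A :\: B) = f @: A :\: f @: B.
Proof.
move=> fi; apply/setP => z; rewrite inE.
case: (boolP (z \in f @: A)) => [/imsetP[y Ay ->]|nA]; last first.
  rewrite andbF; apply/negbTE; apply: contra nA; apply: (subsetP (imsetS _ (subsetDl A B))).
by rewrite !mem_imset // inE Ay andbT.
Qed.

Lemma pattern_inj (U : finType) (f : W -> U) (e1 e2 e3 : {set W}) : injective f ->
  pattern (f @: e1) (f @: e2) (f @: e3) = pattern e1 e2 e3.
Proof.
move=> fi; have fI : forall A B : {set W}, f @: (A :&: B) = f @: A :&: f @: B.
  by move=> A B; apply: imsetI => ? ? _ _; apply: fi.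
rewrite /pattern /regions /= -!imsetU -!fI -!(imsetD_inj _ _ fi).
by rewrite !imset_eq0.
Qed.

Lemma motif_inj (U : finType) (f : W -> U) (M : {set {set W}}) (i : nat) : injective f ->
  motif_of_type M i -> motif_of_type ((fun e : {set W} => f @: e) @: M) i.
Proof.
move=> fi /existsP[e1 /existsP[e2 /existsP[e3 /and5P[/eqP-> d12 d23 d13 /eqP pe]]]].
apply/existsP; exists (f @: e1); apply/existsP; exists (f @: e2); apply/existsP; exists (f @: e3).
have gi := imset_inj fi.
rewrite ?imsetU ?imsetU1 ?imset_set1.
by rewrite eqxx !(inj_eq gi) d12 d23 d13 pattern_inj // pe /=.
Qed.

Lemma vert_G x M : motif_vertices (G x M) = phi x @: motif_vertices M.
Proof.
apply/setP => z; apply/bigcupP/imsetP.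
  move=> [_ /imsetP[e eM ->] /imsetP[y ye ->]]; exists y => //.
  by apply/bigcupP; exists e.
move=> [y /bigcupP[e eM ye] ->]; exists (phi x @: e); first exact: imset_f.
exact: imset_f.
Qed.

Lemma inr_phi x a (A : {set W}) : (inr a \in phi x @: A) = (x == Some a) && (a \in A).
Proof.
apply/imsetP/andP.
  case: x => [b|] [y yA] /=; last by [].
  case: eqP => [yb|] // [] ab; subst; by rewrite eqxx.
move=> [/eqP -> aA]; exists a => //=; by rewrite eqxx.
Qed.

Lemma phi_step x (E : {set {set W}}) e : e \in E -> phi x @: e \in ilth_step E.
Proof.
move=> eE; rewrite /ilth_step inE; case: x => [a|]; last first.
  by apply/orP; left; apply: (imset_f (fun e : {set W} => [set inl y | y in e])).
case: (boolP (a \in e)) => ae.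
  apply/orP; right.
  have -> : phi (Some a) @: e = [set (@inl W W) y | y in e :\ a] :|: [set (@inr W W) a].
    rewrite -{1}(setD1K ae) imsetU1 /= eqxx setUC; congr (_ :|: _).
    apply: eq_in_imset => y; rewrite !inE /= => /andP[ya _]; by rewrite (negbTE ya).
  exact: (imset2_f (fun (e : {set W}) (x : W) =>
      [set (@inl W W) y | y in e :\ x] :|: [set (@inr W W) x])).
apply/orP; left.
have -> : phi (Some a) @: e = [set (@inl W W) y | y in e].
  apply: eq_in_imset => y ye /=; case: eqP => // ya; by move: ae; rewrite -ya ye.
by apply: (imset_f (fun e : {set W} => [set inl y | y in e])).
Qed.

Definition good (V : finType) (i m : nat) (E : {set {set V}}) (M : {set {set V}}) :=
  [&& M \subset E, #|M| == 3, motif_of_type M i & #|motif_vertices M| == m].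

Definition Q (M : {set {set W}}) : {set option W} :=
  None |: [set Some y | y in motif_vertices M].

Lemma card_Q M : #|Q M| = #|motif_vertices M| + 1.
Proof.
rewrite cardsU1 card_imset; last exact: Some_inj.
have -> : None \notin [set Some y | y in motif_vertices M].
  by apply/imsetP => -[].
by rewrite addnC.
Qed.

Lemma G_inj M : {in Q M &, injective (G ^~ M)}.
Proof.
move=> x y xQ yQ /= e.
have ev : phi x @: motif_vertices M = phi y @: motif_vertices M by rewrite -!vert_G e.
have key : forall u v, u \in Q M -> phi u @: motif_vertices M = phi v @: motif_vertices M ->
   forall a, u = Some a -> v = Some a.
  move=> u v uQ euv a ua; move: uQ; rewrite ua !inE => /imsetP[b bV [ab]].
  have : inr a \in phi u @: motif_vertices M by rewrite inr_phi ua eqxx ab bV.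
  by rewrite euv inr_phi => /andP[/eqP].
case: x xQ e ev => [a|] xQ e ev; first by rewrite (key _ _ xQ ev a).
case: y yQ e ev => [b|] yQ e ev //; by rewrite (key _ _ yQ (esym ev) b).
Qed.

Lemma step (i m : nat) (E : {set {set W}}) (S : {set {set {set W}}}) :
  {in S, forall M, good i m E M} ->
  exists S' : {set {set {set (W + W)%type}}},
    {in S', forall N, good i m (ilth_step E) N} /\ (m + 1) * #|S| <= #|S'|.
Proof.
move=> gS.
pose F M := [set G x M | x in Q M].
pose P := [set F M | M in S].
have cF : forall M, M \in S -> #|F M| = m + 1.
  move=> M MS; rewrite card_in_imset; last exact: G_inj.
  by rewrite card_Q; case/and4P: (gS M MS) => _ _ _ /eqP ->.
have memF : forall M N, N \in F M -> unG N = M.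
  by move=> M N /imsetP[x _ ->]; rewrite GK.
have Finj : {in S &, injective F}.
  move=> M M' MS M'S eF.
  have : G None M \in F M by apply: imset_f; rewrite !inE.
  by rewrite eF => /memF; rewrite GK.
have tP : trivIset P.
  apply/trivIsetP => _ _ /imsetP[M MS ->] /imsetP[M' M'S ->] ne.
  rewrite -setI_eq0; apply/eqP/setP => N; rewrite !inE.
  apply/negbTE/negP => /andP[/memF h1 /memF h2].
  by move: ne; rewrite -h1 -h2 eqxx.
exists (cover P); split.
  move=> N /bigcupP[_ /imsetP[M MS ->] /imsetP[x _ ->]].
  case/and4P: (gS M MS) => sub /eqP c3 ty /eqP cv.
  apply/and4P; split.
  - apply/subsetP => _ /imsetP[e eM ->]; apply: phi_step; exact: (subsetP sub).
  - by rewrite card_imset ?c3 //; apply: imset_inj; apply: phi_inj.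
  - by apply: motif_inj => //; apply: phi_inj.
  - by rewrite vert_G card_imset ?cv //; apply: phi_inj.
rewrite -(eqP tP) big_imset //= (eq_bigr (fun _ => m + 1)); last exact: cF.
by rewrite sum_nat_const mulnC.
Qed.

End Aux.

Theorem theorem3p5 (k : nat) (V : finType) (H0 : {set {set V}}) (i m : nat) :
  2 <= k -> uniform k H0 -> i \in [:: 13; 14; 15; 24; 25] ->
  (exists M : {set {set V}},
     [/\ M \subset H0, #|M| = 3, motif_of_type M i & #|motif_vertices M| = m]) ->
  forall t : nat, (m + 1) ^ t <= motif_count (ilth H0 t) i.
Proof.
move=> _ _ _ [M0 [s0 c0 ty0 v0]] t.
have : exists S : {set {set {set ilth_vert V t}}},
    {in S, forall M, good i m (ilth H0 t) M} /\ (m + 1) ^ t <= #|S|.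
  elim: t => [|t [S [gS cS]]].
    exists [set M0]; split; last by rewrite cards1.
    by move=> M; rewrite inE => /eqP ->; rewrite /good s0 c0 ty0 v0 !eqxx.
  have [S' [gS' cS']] := step gS.
  exists S'; split => //; rewrite expnS; apply: leq_trans cS'.
  by rewrite leq_mul2l cS orbT.
move=> [S [gS cS]]; apply: (leq_trans cS); apply: subset_leq_card.
apply/subsetP => M MS; rewrite inE; by case/and4P: (gS M MS) => -> -> -> _.
Qed.
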